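(* Let $M=(C,A,B)$ with $C\in\mathbb{R}^{p\times n}$, $A\in\mathbb{R}^{n\times n}$, $B\in\mathbb{R}^{n\times m}$ and $\rho(A)<1$. For any integers $d_1\ge d_2\ge1$, $$\|\mathcal{H}_{0,\infty,\infty}-\bar{\mathcal{H}}_{0,d_1,d_1}\|_2\le\sqrt2\,\|\mathcal{H}_{0,\infty,\infty}-\bar{\mathcal{H}}_{0,d_2,d_2}\|_2 .$$
   Context: $\mathcal{H}_{k,a,b}$ is the block Hankel matrix whose $(i,j)$ block ($1\le i\le a$, $1\le j\le b$, $a=b=\infty$ allowed) is $CA^{k+i+j-2}B$. For a finite matrix $P$, $\bar P$ denotes $P$ padded with zeros to a doubly infinite matrix. Norms of infinite matrices are operator norms on $\ell^2$. *)

(* Defs.v *)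
From HB Require Import structures.
From mathcomp Require Import all_boot all_order all_algebra.
From mathcomp Require Import all_classical all_reals ereal.
From mathcomp Require Import complex.
Set Implicit Arguments. Unset Strict Implicit. Unset Printing Implicit Defensive.
Import Order.TTheory GRing.Theory Num.Theory.
Local Open Scope ring_scope.

(* rho(A) < 1 : every (complex) eigenvalue of A, i.e. every complex root of
   the characteristic polynomial of A, has modulus < 1. *)
Definition spectral_radius_lt1 (R : realType) (n : nat) (A : 'M[R]_n) : Prop :=
  forall z : R[i], root (map_poly (real_complex R) (char_poly A)) z -> `|z| < 1.

(* Infinite block matrices: the (i,j) block (i,j : nat, 0-indexed) is a p x m
   real matrix; they act on l^2(nat x 'I_m) -> l^2(nat x 'I_p). *)
Definition blockmx (R : Type) (p m : nat) := nat -> nat -> 'M[R]_(p, m).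

(* l^2 operator norm (extended real, +oo if unbounded), computed as the
   supremum of ||H x|| over the dense subspace of finitely supported x with
   ||x|| <= 1 (x supported on the first N block-columns), the l^2 norm of
   H x being the supremum of its partial sums over the first M block-rows. *)
Definition opnorm (R : realType) (p m : nat) (H : blockmx R p m) : \bar R :=
  ereal_sup [set e : \bar R | exists (N M : nat) (x : 'I_N -> 'I_m -> R),
     \sum_(j < N) \sum_(c < m) x j c ^+ 2 <= 1 /\
     e = (Num.sqrt (\sum_(i < M) \sum_(r < p)
            (\sum_(j < N) \sum_(c < m) H i j r c * x j c) ^+ 2))%:E].

(* Block Hankel matrix H_{k,inf,inf}: (i,j) block (1-indexed in the paper)
   C A^(k+i+j-2) B, i.e. C A^(k+i+j) B with 0-indexed i, j. *)
Definition hankel_inf (R : realType) (p n m : nat) (C : 'M[R]_(p, n))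
  (A : 'M[R]_n) (B : 'M[R]_(n, m)) (k : nat) : blockmx R p m :=
  fun i j => C *m (A ^+ (k + i + j)) *m B.

Definition hankel_pad (R : realType) (p n m : nat) (C : 'M[R]_(p, n))
  (A : 'M[R]_n) (B : 'M[R]_(n, m)) (k a b : nat) : blockmx R p m :=
  fun i j => if (i < a)%N && (j < b)%N then C *m (A ^+ (k + i + j)) *m B else 0.

Definition blockmx_sub (R : realType) (p m : nat) (H K : blockmx R p m)
  : blockmx R p m := fun i j => H i j - K i j.

(* Main.v *)
Require Import Defs.
From HB Require Import structures.
From mathcomp Require Import all_boot all_order all_algebra.
From mathcomp Require Import all_classical all_reals ereal.
From mathcomp Require Import complex.
Import Order.TTheory GRing.Theory Num.Theory.
Local Open Scope ring_scope.

Theorem proposition14 (R : realType) (p n m : nat) (C : 'M[R]_(p, n))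
  (A : 'M[R]_n) (B : 'M[R]_(n, m)) (d1 d2 : nat) :
  spectral_radius_lt1 A -> (1 <= d2)%N -> (d2 <= d1)%N ->
  (opnorm (blockmx_sub (hankel_inf C A B 0) (hankel_pad C A B 0 d1 d1))
   <= (Num.sqrt 2)%:E *
      opnorm (blockmx_sub (hankel_inf C A B 0) (hankel_pad C A B 0 d2 d2)))%E.
Proof.
move=> _ _ d21.
set E1 := blockmx_sub _ (hankel_pad C A B 0 d1 d1).
set E2 := blockmx_sub _ (hankel_pad C A B 0 d2 d2).
have ent1 : forall i j, (d1 <= i)%N || (d1 <= j)%N -> E1 i j = E2 i j.
  move=> i j H; rewrite /E1 /E2 /blockmx_sub /hankel_pad.
  have -> : ((i < d1)%N && (j < d1)%N) = false.
    by case/orP: H => H; [rewrite ltnNge H | rewrite [(j < d1)%N]ltnNge H andbF].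
  have -> : ((i < d2)%N && (j < d2)%N) = false.
    case/orP: H => H.
      by rewrite ltnNge (leq_trans d21 H).
    by rewrite [(j < d2)%N]ltnNge (leq_trans d21 H) andbF.
  by [].
have ent0 : forall i j, (i < d1)%N -> (j < d1)%N -> E1 i j = 0.
  move=> i j Hi Hj; rewrite /E1 /blockmx_sub /hankel_pad Hi Hj /=.
  by rewrite subrr.
apply: ge_ereal_sup => _ [N [M [x [hx ->]]]].
set x' : 'I_N -> 'I_m -> R := fun j c => if (d1 <= j)%N then x j c else 0.
have hx' : \sum_(j < N) \sum_(c < m) x' j c ^+ 2 <= 1.
  apply: le_trans hx; apply: ler_sum => j _; apply: ler_sum => c _.
  rewrite /x'; case: ifP => _ //; rewrite expr0n /=; exact: sqr_ge0.
set U := \sum_(i < M) \sum_(r < p)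
            (\sum_(j < N) \sum_(c < m) E2 i j r c * x j c) ^+ 2.
set V := \sum_(i < M) \sum_(r < p)
            (\sum_(j < N) \sum_(c < m) E2 i j r c * x' j c) ^+ 2.
have U0 : 0 <= U by apply: sumr_ge0 => i _; apply: sumr_ge0 => r _; exact: sqr_ge0.
have V0 : 0 <= V by apply: sumr_ge0 => i _; apply: sumr_ge0 => r _; exact: sqr_ge0.
have hT : \sum_(i < M) \sum_(r < p)
            (\sum_(j < N) \sum_(c < m) E1 i j r c * x j c) ^+ 2 <= U + V.
  rewrite /U /V -big_split /=; apply: ler_sum => i _.
  rewrite -big_split /=; apply: ler_sum => r _.
  case: (leqP d1 i) => hi.
    rewrite (eq_bigr (fun j : 'I_N => \sum_(c < m) E2 i j r c * x j c)); last first.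
      by move=> j _; apply: eq_bigr => c _; rewrite ent1 ?hi.
    by rewrite lerDl sqr_ge0.
  rewrite -[X in X <= _]add0r; apply: lerD; first exact: sqr_ge0.
  rewrite le_eqVlt; apply/orP; left; apply/eqP; congr (_ ^+ 2).
  apply: eq_bigr => j _; apply: eq_bigr => c _; rewrite /x'.
  case: (leqP d1 j) => hj.
    by rewrite ent1 // hj orbT.
  by rewrite ent0 // mxE mul0r mulr0.
set w := Num.max (Num.sqrt U) (Num.sqrt V).
have hw : (w%:E <= opnorm E2)%E.
  rewrite /w; case: (leP (Num.sqrt U) (Num.sqrt V)) => _.
    by apply: ereal_sup_ubound; exists N, M, x'.
  by apply: ereal_sup_ubound; exists N, M, x.
have h2 : (0%R%:E <= (Num.sqrt (2:R))%:E)%E.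
  by rewrite lee_fin sqrtr_ge0.
have h3 := lee_wpmul2l h2 hw.
apply: le_trans h3.
rewrite -EFinM lee_fin.
have w0 : 0 <= w by rewrite /w le_max sqrtr_ge0.
apply: le_trans (ler_wsqrtr hT) _.
have hUV : U + V <= 2 * w ^+ 2.
  have hU : U <= w ^+ 2.
    rewrite -[U]sqr_sqrtr // lerXn2r ?nnegrE ?sqrtr_ge0 //.
    by rewrite /w le_max lexx.
  have hV : V <= w ^+ 2.
    rewrite -[V]sqr_sqrtr // lerXn2r ?nnegrE ?sqrtr_ge0 //.
    by rewrite /w le_max lexx orbT.
  by rewrite mulr2n mulrDl mul1r; apply: lerD.
apply: le_trans (ler_wsqrtr hUV) _.
by rewrite sqrtrM ?ler0n // sqrtr_sqr ger0_norm.
Qed.
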